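(* Let $\mathcal C$ be a hyper-extensive category with finite products and terminal object $1$, and let $N=\coprod_{n<\omega}1$. Then $N$, with $\mathrm{inj}_0\colon1\to N$ and $[\mathrm{inj}_{n+1}]_{n<\omega}\colon N\to N$, is a natural numbers object (an initial algebra for $1+(-)$), and for every object $Y$ the free cia for the identity functor $\mathrm{Id}$ on $Y$ (equivalently, the terminal coalgebra for $(-)+Y$) is $TY\cong N\times Y+1$.
   Context: Hyper-extensive category: countable coproducts that are universal (pullbacks along arbitrary morphisms exist and preserve them), disjoint (injections monic, pairwise pullbacks initial), and coherent (a countable family of pairwise disjoint coproduct injections has copairing a coproduct injection). For an endofunctor $G$, an algebra $a\colon GA\to A$ is a cia if every $e\colon X\to GX+A$ admits a unique $s$ with $s=[a,\mathrm{id}_A]\cdot(Gs+\mathrm{id}_A)\cdot e$; a free cia on $Y$ is a cia with a morphism from $Y$ through which every morphism from $Y$ into a cia factors uniquely via an algebra morphism. *)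

(* Defs.v *)
From Stdlib Require Import Arith.

Set Implicit Arguments.

Record Category := {
  Ob :> Type;
  Hom : Ob -> Ob -> Type;
  idm : forall A : Ob, Hom A A;
  comp : forall (A B D : Ob), Hom B D -> Hom A B -> Hom A D;
  comp_assoc : forall (A B D E : Ob) (h : Hom D E) (g : Hom B D) (f : Hom A B),
      comp h (comp g f) = comp (comp h g) f;
  comp_id_l : forall (A B : Ob) (f : Hom A B), comp (idm B) f = f;
  comp_id_r : forall (A B : Ob) (f : Hom A B), comp f (idm A) = f
}.

Arguments Hom {c} _ _.
Arguments idm {c} _.
Arguments comp {c A B D} _ _.

Notation "g \o' f" := (comp g f) (at level 40, left associativity).

Section Basic.
Variable C : Category.

Definition is_initial (Z : C) : Prop :=
  forall X : C, exists! h : Hom Z X, True.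

Definition is_terminal (T : C) : Prop :=
  forall X : C, exists! h : Hom X T, True.

Definition monic {A B : C} (m : Hom A B) : Prop :=
  forall (X : C) (u v : Hom X A), m \o' u = m \o' v -> u = v.

Definition is_iso {A B : C} (f : Hom A B) : Prop :=
  exists g : Hom B A, g \o' f = idm A /\ f \o' g = idm B.

Definition isomorphic (A B : C) : Prop := exists f : Hom A B, is_iso f.

Definition is_coproduct {I : Type} (A : I -> C) (S : C)
    (inj : forall i, Hom (A i) S) : Prop :=
  forall (X : C) (f : forall i, Hom (A i) X),
    exists! h : Hom S X, forall i, h \o' inj i = f i.

Definition is_bincoproduct {A B S : C} (l : Hom A S) (r : Hom B S) : Prop :=
  forall (X : C) (f : Hom A X) (g : Hom B X),
    exists! h : Hom S X, h \o' l = f /\ h \o' r = g.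

Definition is_binproduct {A B P : C} (p1 : Hom P A) (p2 : Hom P B) : Prop :=
  forall (X : C) (f : Hom X A) (g : Hom X B),
    exists! h : Hom X P, p1 \o' h = f /\ p2 \o' h = g.

Definition has_binary_products : Prop :=
  forall A B : C, exists (P : C) (p1 : Hom P A) (p2 : Hom P B),
    is_binproduct p1 p2.

Definition is_pullback {A B D P : C} (f : Hom A D) (g : Hom B D)
    (p : Hom P A) (q : Hom P B) : Prop :=
  f \o' p = g \o' q /\
  forall (X : C) (u : Hom X A) (v : Hom X B), f \o' u = g \o' v ->
    exists! h : Hom X P, p \o' h = u /\ q \o' h = v.

Definition is_coproduct_injection {X Z : C} (m : Hom X Z) : Prop :=
  exists (Y : C) (m' : Hom Y Z), is_bincoproduct m m'.

Definition countable_type (I : Type) : Prop :=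
  exists enc : I -> nat, forall i j, enc i = enc j -> i = j.

Definition has_countable_coproducts : Prop :=
  forall (I : Type), countable_type I -> forall A : I -> C,
    exists (S : C) (inj : forall i, Hom (A i) S), is_coproduct A S inj.

Definition coproducts_universal : Prop :=
  forall (I : Type), countable_type I -> forall (A : I -> C) (S : C)
    (inj : forall i, Hom (A i) S), is_coproduct A S inj ->
    forall (B : C) (f : Hom B S),
      (forall i, exists (P : C) (p : Hom P (A i)) (q : Hom P B),
          is_pullback (inj i) f p q) /\
      (forall (P : I -> C) (p : forall i, Hom (P i) (A i))
              (q : forall i, Hom (P i) B),
          (forall i, is_pullback (inj i) f (p i) (q i)) ->
          is_coproduct P B q).

Definition coproducts_disjoint : Prop :=
  forall (I : Type), countable_type I -> forall (A : I -> C) (S : C)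
    (inj : forall i, Hom (A i) S), is_coproduct A S inj ->
    (forall i, monic (inj i)) /\
    (forall i j, i <> j -> forall (P : C) (p : Hom P (A i)) (q : Hom P (A j)),
        is_pullback (inj i) (inj j) p q -> is_initial P).

Definition coproducts_coherent : Prop :=
  forall (I : Type), countable_type I -> forall (X : I -> C) (Z : C)
    (m : forall i, Hom (X i) Z),
    (forall i, is_coproduct_injection (m i)) ->
    (forall i j, i <> j -> exists (P : C) (p : Hom P (X i)) (q : Hom P (X j)),
        is_pullback (m i) (m j) p q /\ is_initial P) ->
    forall (S : C) (s : forall i, Hom (X i) S), is_coproduct X S s ->
    forall h : Hom S Z, (forall i, h \o' s i = m i) ->
    is_coproduct_injection h.

Definition hyper_extensive : Prop :=
  has_countable_coproducts /\ coproducts_universal /\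
  coproducts_disjoint /\ coproducts_coherent.

(** Natural numbers object (Lawvere), i.e. initial algebra for [1 + (-)]
    presented by zero [z : 1 -> N] and successor [s : N -> N]. *)
Definition is_NNO (one N : C) (z : Hom one N) (s : Hom N N) : Prop :=
  forall (X : C) (x : Hom one X) (f : Hom X X),
    exists! h : Hom N X, h \o' z = x /\ h \o' s = f \o' h.

(** For [e : X -> X + A], [s] solves [e] iff
    [s = [a, id_A] . (s + id_A) . e = [a . s, id_A] . e]; the copairing is
    expressed through the universal property of the chosen coproduct. *)
Definition solves {A X Q : C} (a : Hom A A) (l : Hom X Q) (r : Hom A Q)
    (e : Hom X Q) (s : Hom X A) : Prop :=
  forall c : Hom Q A, c \o' l = a \o' s -> c \o' r = idm A -> s = c \o' e.

Definition is_cia_Id {A : C} (a : Hom A A) : Prop :=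
  forall (X Q : C) (l : Hom X Q) (r : Hom A Q), is_bincoproduct l r ->
    forall e : Hom X Q, exists! s : Hom X A, solves a l r e s.

Definition is_free_cia_Id {Y T : C} (a : Hom T T) (eta : Hom Y T) : Prop :=
  is_cia_Id a /\
  forall (B : C) (b : Hom B B), is_cia_Id b -> forall f : Hom Y B,
    exists! h : Hom T B, h \o' a = b \o' h /\ h \o' eta = f.

End Basic.

Arguments is_initial {C} _.
Arguments is_terminal {C} _.
Arguments monic {C A B} _.
Arguments is_iso {C A B} _.
Arguments isomorphic {C} _ _.
Arguments is_coproduct {C I} _ _ _.
Arguments is_bincoproduct {C A B S} _ _.
Arguments is_binproduct {C A B P} _ _.
Arguments is_pullback {C A B D P} _ _ _ _.
Arguments is_coproduct_injection {C X Z} _.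
Arguments is_NNO {C one N} _ _.
Arguments solves {C A X Q} _ _ _ _ _.
Arguments is_cia_Id {C A} _.
Arguments is_free_cia_Id {C Y T} _ _.

(* Main.v *)
Require Import Defs.
From Stdlib Require Import ClassicalEpsilon Arith.

Lemma assoc {C : Category} {A B D E : C} (h : Hom D E) (g : Hom B D) (f : Hom A B) :
  h \o' (g \o' f) = (h \o' g) \o' f.
Proof. apply comp_assoc. Qed.
Lemma idl {C : Category} {A B : C} (f : Hom A B) : idm B \o' f = f.
Proof. apply comp_id_l. Qed.
Lemma idr {C : Category} {A B : C} (f : Hom A B) : f \o' idm A = f.
Proof. apply comp_id_r. Qed.

Ltac ra := repeat rewrite <- assoc.

Lemma ext_eq {C : Category} {A B B' D Z : C} (f : Hom B D) (g : Hom A B)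
  (f' : Hom B' D) (g' : Hom A B') (H : f \o' g = f' \o' g') (k : Hom Z A) :
  f \o' (g \o' k) = f' \o' (g' \o' k).
Proof. rewrite !assoc, H; reflexivity. Qed.

Lemma cop_unique {C : Category} {I : Type} (A : I -> C) (S : C) inj
  (H : is_coproduct A S inj) (X : C) (h1 h2 : Hom S X) :
  (forall i, h1 \o' inj i = h2 \o' inj i) -> h1 = h2.
Proof.
  intros E. destruct (H X (fun i => h2 \o' inj i)) as [h [Hh U]].
  rewrite <- (U h1 E), <- (U h2 (fun i => eq_refl)). reflexivity.
Qed.

Lemma bcop_unique {C : Category} {A B S : C} (l : Hom A S) (r : Hom B S)
  (H : is_bincoproduct l r) (X : C) (h1 h2 : Hom S X) :
  h1 \o' l = h2 \o' l -> h1 \o' r = h2 \o' r -> h1 = h2.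
Proof.
  intros E1 E2. destruct (H X (h2 \o' l) (h2 \o' r)) as [h [Hh U]].
  rewrite <- (U h1 (conj E1 E2)), <- (U h2 (conj eq_refl eq_refl)). reflexivity.
Qed.

Lemma init_unique {C : Category} (Z X : C) (HZ : is_initial Z) (f g : Hom Z X) : f = g.
Proof.
  destruct (HZ X) as [h [_ U]]. rewrite <- (U f I), <- (U g I). reflexivity.
Qed.

Lemma term_unique {C : Category} (Z X : C) (HZ : is_terminal Z) (f g : Hom X Z) : f = g.
Proof.
  destruct (HZ X) as [h [_ U]]. rewrite <- (U f I), <- (U g I). reflexivity.
Qed.

Lemma init_map {C : Category} (Z X : C) (HZ : is_initial Z) : Hom Z X.
Proof.
  destruct (constructive_indefinite_description _ (HZ X)) as [h _]. exact h.
Qed.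

Definition bfam {C : Category} (A B : C) : bool -> C := fun b => if b then A else B.
Definition binj {C : Category} {A B S : C} (l : Hom A S) (r : Hom B S) :
  forall b, Hom (bfam A B b) S :=
  fun b => match b return Hom (bfam A B b) S with true => l | false => r end.

Lemma bin_to_cop {C : Category} {A B S : C} (l : Hom A S) (r : Hom B S) :
  is_bincoproduct l r -> is_coproduct (bfam A B) S (binj l r).
Proof.
  intros H X f. destruct (H X (f true) (f false)) as [h [[H1 H2] U]].
  exists h. split.
  - intros [|]; assumption.
  - intros h' E. apply U. split; [apply (E true) | apply (E false)].
Qed.

Lemma cop_to_bin {C : Category} {P : bool -> C} {S : C} (k : forall b, Hom (P b) S) :
  is_coproduct P S k -> is_bincoproduct (k true) (k false).
Proof.
  intros H X f g.
  destruct (H X (fun b => match b as b0 return Hom (P b0) X with true => f | false => g end))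
    as [h [Hh U]].
  exists h. split.
  - split; [apply (Hh true) | apply (Hh false)].
  - intros h' [E1 E2]. apply U. intros [|]; assumption.
Qed.

Lemma count_bool : countable_type bool.
Proof. exists (fun b : bool => if b then 0 else 1). intros [|] [|]; simpl; congruence. Qed.
Lemma count_nat : countable_type nat.
Proof. exists (fun n => n). auto. Qed.
Lemma count_opt : countable_type (option nat).
Proof.
  exists (fun o => match o with Some n => S n | None => 0 end).
  intros [|] [|]; simpl; congruence.
Qed.
Lemma count_empty : countable_type Empty_set.
Proof. exists (fun e : Empty_set => match e with end). intros []. Qed.

Lemma bincop_exists (C : Category) (HC : hyper_extensive C) (A B : C) :
  exists (S : C) (l : Hom A S) (r : Hom B S), is_bincoproduct l r.
Proof.
  destruct HC as [Hcc _].
  destruct (Hcc bool count_bool (bfam A B)) as [S [k Hk]].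
  exists S, (k true), (k false). exact (cop_to_bin k Hk).
Qed.

Lemma strict_init (C : Category) (HC : hyper_extensive C) (Z P : C)
  (HZ : is_initial Z) (f : Hom P Z) : is_initial P.
Proof.
  destruct HC as [_ [Hun _]].
  pose (A := fun e : Empty_set => match e return C with end).
  pose (k := fun e : Empty_set => match e return Hom (A e) Z with end).
  assert (Hk : is_coproduct A Z k).
  { intros X g. destruct (HZ X) as [h [_ U]]. exists h. split.
    - intros [].
    - intros h' _. apply U; exact Logic.I. }
  destruct (Hun Empty_set count_empty A Z k Hk P f) as [_ H2].
  pose (Pf := fun e : Empty_set => match e return C with end).
  assert (Hc := H2 Pf (fun e => match e with end) (fun e => match e with end) (fun e => match e with end)).
  intros X. destruct (Hc X (fun e => match e with end)) as [h [_ U]].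
  exists h. split; [exact Logic.I|]. intros h' _. apply U. intros [].
Qed.

Lemma cop_initials (C : Category) {I : Type} (A : I -> C) (S : C) inj
  (H : is_coproduct A S inj) (HA : forall i, is_initial (A i)) : is_initial S.
Proof.
  intros X. destruct (H X (fun i => init_map (A i) X (HA i))) as [h [_ U]].
  exists h. split; [exact Logic.I|]. intros h' _. apply U. intros i. apply init_unique, HA.
Qed.

Lemma decompose (C : Category) (HC : hyper_extensive C) {I : Type} (cI : countable_type I)
  (A : I -> C) (S : C) inj (H : is_coproduct A S inj) (B : C) (f : Hom B S) :
  exists (P : I -> C) (p : forall i, Hom (P i) (A i)) (q : forall i, Hom (P i) B),
    (forall i, is_pullback (inj i) f (p i) (q i)) /\ is_coproduct P B q.
Proof.
  destruct HC as [_ [Hun _]].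
  destruct (Hun I cI A S inj H B f) as [H1 H2].
  pose (g1 := fun i => constructive_indefinite_description _ (H1 i)).
  pose (P := fun i => proj1_sig (g1 i)).
  pose (g2 := fun i => constructive_indefinite_description _ (proj2_sig (g1 i))).
  pose (p := fun i => proj1_sig (g2 i)).
  pose (g3 := fun i => constructive_indefinite_description _ (proj2_sig (g2 i))).
  pose (q := fun i => proj1_sig (g3 i)).
  assert (Hpb : forall i, is_pullback (inj i) f (p i) (q i)).
  { intros i. exact (proj2_sig (g3 i)). }
  exists P, p, q. split; [exact Hpb|]. exact (H2 P p q Hpb).
Qed.

Lemma bdecompose (C : Category) (HC : hyper_extensive C) {A1 A2 S : C}
  (l : Hom A1 S) (r : Hom A2 S) (H : is_bincoproduct l r) (B : C) (f : Hom B S) :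
  exists (P1 P2 : C) (p1 : Hom P1 A1) (p2 : Hom P2 A2) (q1 : Hom P1 B) (q2 : Hom P2 B),
    is_pullback l f p1 q1 /\ is_pullback r f p2 q2 /\ is_bincoproduct q1 q2.
Proof.
  destruct (decompose C HC count_bool _ _ _ (bin_to_cop l r H) B f) as [P [p [q [Hp Hc]]]].
  exists (P true), (P false), (p true), (p false), (q true), (q false).
  split; [exact (Hp true)|]. split; [exact (Hp false)|].
  apply cop_to_bin. exact Hc.
Qed.

Lemma cop_disj_cone (C : Category) (HC : hyper_extensive C) {I : Type} (cI : countable_type I)
  (A : I -> C) (S : C) inj (H : is_coproduct A S inj) (i j : I) (Hij : i <> j)
  (Z : C) (u : Hom Z (A i)) (v : Hom Z (A j)) :
  inj i \o' u = inj j \o' v -> is_initial Z.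
Proof.
  intros E. assert (HC' := HC). destruct HC' as [_ [Hun [Hdj _]]].
  destruct (Hun I cI A S inj H (A j) (inj j)) as [H1 _].
  destruct (H1 i) as [P [p [q Hpb]]].
  destruct (Hdj I cI A S inj H) as [_ Hd].
  assert (HP := Hd i j Hij P p q Hpb).
  destruct Hpb as [_ Hpb]. destruct (Hpb Z u v E) as [h _].
  exact (strict_init C HC P Z HP h).
Qed.

Lemma bcop_disj_cone (C : Category) (HC : hyper_extensive C) {A B S : C}
  (l : Hom A S) (r : Hom B S) (H : is_bincoproduct l r)
  (Z : C) (u : Hom Z A) (v : Hom Z B) : l \o' u = r \o' v -> is_initial Z.
Proof.
  intros E.
  exact (cop_disj_cone C HC count_bool _ _ _ (bin_to_cop l r H) true false
           ltac:(discriminate) Z u v E).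
Qed.

Lemma cop_monic (C : Category) (HC : hyper_extensive C) {I : Type} (cI : countable_type I)
  (A : I -> C) (S : C) inj (H : is_coproduct A S inj) (i : I) : monic (inj i).
Proof.
  destruct HC as [_ [_ [Hdj _]]]. exact (proj1 (Hdj I cI A S inj H) i).
Qed.

Lemma bcop_monic_l (C : Category) (HC : hyper_extensive C) {A B S : C}
  (l : Hom A S) (r : Hom B S) (H : is_bincoproduct l r) : monic l.
Proof. exact (cop_monic C HC count_bool _ _ _ (bin_to_cop l r H) true). Qed.

Lemma pb_inj (C : Category) (HC : hyper_extensive C) {X Z : C} (m : Hom X Z)
  (Hm : is_coproduct_injection m) (B : C) (f : Hom B Z) :
  exists (P : C) (p : Hom P X) (q : Hom P B), is_pullback m f p q /\ is_coproduct_injection q.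
Proof.
  destruct Hm as [Y [m' Hm]].
  destruct (bdecompose C HC m m' Hm B f) as [P1 [P2 [p1 [p2 [q1 [q2 [H1 [H2 H3]]]]]]]].
  exists P1, p1, q1. split; [exact H1|]. exists P2, q2. exact H3.
Qed.

Lemma comp_inj (C : Category) (HC : hyper_extensive C) {D X Q : C}
  (d : Hom D X) (l : Hom X Q) :
  is_coproduct_injection d -> is_coproduct_injection l -> is_coproduct_injection (l \o' d).
Proof.
  intros [D' [d' Hd]] [T [r Hl]].
  destruct (bincop_exists C HC D' T) as [W [u [v Hw]]].
  destruct (Hw Q (l \o' d') r) as [k [[Hk1 Hk2] _]].
  exists W, k. intros Z f g.
  destruct (Hd Z f (g \o' u)) as [h1 [[E1 E2] _]].
  destruct (Hl Z h1 (g \o' v)) as [h [[E3 E4] _]].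
  exists h. split.
  - split.
    + rewrite assoc, E3, E1. reflexivity.
    + apply (bcop_unique u v Hw).
      * rewrite <- assoc, Hk1, assoc, E3, E2. reflexivity.
      * rewrite <- assoc, Hk2, E4. reflexivity.
  - intros h' [F1 F2]. symmetry. apply (bcop_unique l r Hl).
    + apply (bcop_unique d d' Hd).
      * rewrite <- !assoc, F1, assoc, E3, E1. reflexivity.
      * rewrite <- !assoc, <- Hk1, (assoc h' k u), F2, Hk1, assoc, E3, E2. reflexivity.
    + rewrite <- Hk2, (assoc h' k v), F2, Hk2, E4. reflexivity.
Qed.

Lemma factor2 (C : Category) {P1 P2 Z W V : C} (j1 : Hom P1 Z) (j2 : Hom P2 Z)
  (H : is_bincoproduct j1 j2) (f : Hom Z W) (g : Hom V W) :
  (is_initial P1 \/ exists w, f \o' j1 = g \o' w) ->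
  (is_initial P2 \/ exists w, f \o' j2 = g \o' w) ->
  exists s, f = g \o' s.
Proof.
  intros H1 H2.
  assert (X1 : exists w1 : Hom P1 V, f \o' j1 = g \o' w1).
  { destruct H1 as [H1|H1]; [|exact H1].
    exists (init_map P1 V H1). apply init_unique; exact H1. }
  assert (X2 : exists w2 : Hom P2 V, f \o' j2 = g \o' w2).
  { destruct H2 as [H2|H2]; [|exact H2].
    exists (init_map P2 V H2). apply init_unique; exact H2. }
  destruct X1 as [w1 E1], X2 as [w2 E2].
  destruct (H V w1 w2) as [s [[F1 F2] _]].
  exists s. apply (bcop_unique j1 j2 H).
  - rewrite <- assoc, F1. exact E1.
  - rewrite <- assoc, F2. exact E2.
Qed.

Definition Fam {C : Category} (Y one : C) : option nat -> C :=
  fun o => match o with Some _ => Y | None => one end.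

Lemma U_lemma (C : Category) (HC : hyper_extensive C) (one Y T : C)
  (iota : forall o, Hom (Fam Y one o) T) (HT : is_coproduct (Fam Y one) T iota)
  (a : Hom T T) (Ha1 : forall n, a \o' iota (Some n) = iota (Some (S n)))
  (Ha2 : a \o' iota None = iota None)
  (D : C) (g : Hom D T) (s : Hom D D) (E : g = a \o' (g \o' s)) :
  forall n (P : C) (m : Hom P D) (y : Hom P Y), g \o' m = iota (Some n) \o' y -> is_initial P.
Proof.
  induction n as [|n IH]; intros P m y Hm;
  destruct (decompose C HC count_opt _ _ _ HT P (g \o' (s \o' m))) as [P' [p [q [Hpb Hc]]]];
  apply (cop_initials C P' P q Hc); intros o; destruct (Hpb o) as [Eo _].
  all: assert (K : iota (Some _) \o' (y \o' q o) = a \o' (iota o \o' p o)) by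
    (rewrite Eo, assoc, <- Hm; rewrite E at 1; ra; reflexivity).
  all: destruct o as [k|].
  - rewrite (assoc a), Ha1 in K.
    exact (cop_disj_cone C HC count_opt _ _ _ HT (Some 0) (Some (S k)) ltac:(discriminate) _ _ _ K).
  - rewrite (assoc a), Ha2 in K.
    exact (cop_disj_cone C HC count_opt _ _ _ HT (Some 0) None ltac:(discriminate) _ _ _ K).
  - rewrite (assoc a), Ha1 in K.
    destruct (Nat.eq_dec n k) as [<-|Hne].
    + apply (cop_monic C HC count_opt _ _ _ HT (Some (S n))) in K.
      apply (IH _ (s \o' (m \o' q (Some n))) (p (Some n))).
      rewrite Eo. ra. reflexivity.
    + exact (cop_disj_cone C HC count_opt _ _ _ HT (Some (S n)) (Some (S k))
               ltac:(congruence) _ _ _ K).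
  - rewrite (assoc a), Ha2 in K.
    exact (cop_disj_cone C HC count_opt _ _ _ HT (Some (S n)) None ltac:(discriminate) _ _ _ K).
Qed.

Lemma U_fix (C : Category) (HC : hyper_extensive C) (one Y T : C) (Hone : is_terminal one)
  (iota : forall o, Hom (Fam Y one o) T) (HT : is_coproduct (Fam Y one) T iota)
  (a : Hom T T) (Ha1 : forall n, a \o' iota (Some n) = iota (Some (S n)))
  (Ha2 : a \o' iota None = iota None)
  (D : C) (g : Hom D T) (s : Hom D D) (E : g = a \o' (g \o' s)) (z : Hom D one) :
  g = iota None \o' z.
Proof.
  destruct (decompose C HC count_opt _ _ _ HT D g) as [P' [p [q [Hpb Hc]]]].
  apply (cop_unique P' D q Hc). intros [n|].
  - apply init_unique.
    destruct (Hpb (Some n)) as [Eo _].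
    exact (U_lemma C HC one Y T iota HT a Ha1 Ha2 D g s E n _ (q (Some n)) (p (Some n)) (eq_sym Eo)).
  - destruct (Hpb None) as [Eo _]. rewrite <- Eo. rewrite <- assoc. f_equal.
    apply term_unique; exact Hone.
Qed.

Record PBdata (C : Category) {A B Z : C} (m : Hom A Z) (f : Hom B Z) := {
  pbO : C; pbp : Hom pbO A; pbq : Hom pbO B;
  pbH : is_pullback m f pbp pbq; pbI : is_coproduct_injection pbq }.
Arguments pbO {C A B Z m f}. Arguments pbp {C A B Z m f}. Arguments pbq {C A B Z m f}.
Arguments pbH {C A B Z m f}. Arguments pbI {C A B Z m f}.

Lemma get_pb (C : Category) (HC : hyper_extensive C) {A B Z : C} (m : Hom A Z)
  (Hm : is_coproduct_injection m) (f : Hom B Z) : PBdata C m f.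
Proof.
  assert (H : exists w : {P : C & (Hom P A * Hom P B)%type},
            is_pullback m f (fst (projT2 w)) (snd (projT2 w)) /\
            is_coproduct_injection (snd (projT2 w))).
  { destruct (pb_inj C HC m Hm B f) as [P [p [q [H1 H2]]]].
    exists (existT _ P (p, q)). simpl. auto. }
  destruct (constructive_indefinite_description _ H) as [[P [p q]] [H1 H2]].
  exact {| pbO := P; pbp := p; pbq := q; pbH := H1; pbI := H2 |}.
Qed.

Record Ent (C : Category) (X T : C) := {
  eD : C; ed : Hom eD X; et : Hom eD T; einj : is_coproduct_injection ed }.
Arguments eD {C X T}. Arguments ed {C X T}. Arguments et {C X T}. Arguments einj {C X T}.

Definition step (C : Category) (HC : hyper_extensive C) {X Q T : C} (l : Hom X Q)
  (Hl : is_coproduct_injection l) (e : Hom X Q) (E : Ent C X T) : Ent C X T :=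
  let P := get_pb C HC (l \o' ed E) (comp_inj C HC _ _ (einj E) Hl) e in
  {| eD := pbO P; ed := pbq P; et := et E \o' pbp P; einj := pbI P |}.

Lemma step_spec (C : Category) (HC : hyper_extensive C) {X Q T : C} (l : Hom X Q)
  (Hl : is_coproduct_injection l) (e : Hom X Q) (E : Ent C X T) :
  exists s : Hom (eD (step C HC l Hl e E)) (eD E),
    is_pullback (l \o' ed E) e s (ed (step C HC l Hl e E)) /\
    et (step C HC l Hl e E) = et E \o' s.
Proof.
  exists (pbp (get_pb C HC (l \o' ed E) (comp_inj C HC _ _ (einj E) Hl) e)).
  split; [apply pbH | reflexivity].
Qed.

Definition init (C : Category) (HC : hyper_extensive C) {X Q T : C} (r : Hom T Q)
  (Hr : is_coproduct_injection r) (e : Hom X Q) : Ent C X T :=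
  let P := get_pb C HC r Hr e in
  {| eD := pbO P; ed := pbq P; et := pbp P; einj := pbI P |}.

Lemma init_spec (C : Category) (HC : hyper_extensive C) {X Q T : C} (r : Hom T Q)
  (Hr : is_coproduct_injection r) (e : Hom X Q) :
  is_pullback r e (et (init C HC r Hr e)) (ed (init C HC r Hr e)).
Proof. apply pbH. Qed.

Fixpoint Dk (C : Category) (HC : hyper_extensive C) {X Q T : C} (l : Hom X Q) (r : Hom T Q)
  (Hl : is_coproduct_injection l) (Hr : is_coproduct_injection r) (e : Hom X Q) (k : nat)
  : Ent C X T :=
  match k with
  | 0 => init C HC r Hr e
  | S k => step C HC l Hl e (Dk C HC l r Hl Hr e k)
  end.

Lemma bcop_swap {C : Category} {A B S : C} (l : Hom A S) (r : Hom B S) :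
  is_bincoproduct l r -> is_bincoproduct r l.
Proof.
  intros H X f g. destruct (H X g f) as [h [[E1 E2] U]].
  exists h. split; [auto|]. intros h' [F1 F2]. apply U; auto.
Qed.

Lemma Dk_disj (C : Category) (HC : hyper_extensive C) {X Q T : C} (l : Hom X Q) (r : Hom T Q)
  (Hlr : is_bincoproduct l r)
  (Hl : is_coproduct_injection l) (Hr : is_coproduct_injection r) (e : Hom X Q) :
  forall j k, j <> k -> forall (Z : C) (u : Hom Z (eD (Dk C HC l r Hl Hr e j)))
    (v : Hom Z (eD (Dk C HC l r Hl Hr e k))),
    ed (Dk C HC l r Hl Hr e j) \o' u = ed (Dk C HC l r Hl Hr e k) \o' v -> is_initial Z.
Proof.
  induction j as [|j IH]; intros [|k] Hjk Z u v Euv.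
  - congruence.
  - destruct (init_spec C HC r Hr e) as [E0 _].
    destruct (step_spec C HC l Hl e (Dk C HC l r Hl Hr e k)) as [s [[E1 _] _]].
    cbn [Dk] in Euv.
    apply (bcop_disj_cone C HC l r Hlr Z (ed (Dk C HC l r Hl Hr e k) \o' (s \o' v))
             (et (init C HC r Hr e) \o' u)).
    rewrite assoc, assoc, E1, (assoc r), E0. ra. rewrite Euv. reflexivity.
  - destruct (init_spec C HC r Hr e) as [E0 _].
    destruct (step_spec C HC l Hl e (Dk C HC l r Hl Hr e j)) as [s [[E1 _] _]].
    cbn [Dk] in Euv.
    apply (bcop_disj_cone C HC l r Hlr Z (ed (Dk C HC l r Hl Hr e j) \o' (s \o' u))
             (et (init C HC r Hr e) \o' v)).
    rewrite assoc, assoc, E1, (assoc r), E0. ra. rewrite Euv. reflexivity.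
  - destruct (step_spec C HC l Hl e (Dk C HC l r Hl Hr e j)) as [s [[E1 _] _]].
    destruct (step_spec C HC l Hl e (Dk C HC l r Hl Hr e k)) as [s' [[E2 _] _]].
    cbn [Dk] in Euv.
    apply (IH k ltac:(congruence) Z (s \o' u) (s' \o' v)).
    apply (bcop_monic_l C HC l r Hlr).
    rewrite !assoc, E1, E2. ra. rewrite Euv. reflexivity.
Qed.

Definition apow {C : Category} {T : C} (a : Hom T T) (k : nat) : Hom T T :=
  Nat.iter k (fun f => a \o' f) (idm T).

Lemma T_cia (C : Category) (HC : hyper_extensive C) (one Y T : C) (Hone : is_terminal one)
  (iota : forall o, Hom (Fam Y one o) T) (HT : is_coproduct (Fam Y one) T iota)
  (a : Hom T T) (Ha1 : forall n, a \o' iota (Some n) = iota (Some (S n)))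
  (Ha2 : a \o' iota None = iota None) : is_cia_Id a.
Proof.
  intros X Q l r Hlr e.
  assert (Hl : is_coproduct_injection l) by (exists T, r; exact Hlr).
  assert (Hr : is_coproduct_injection r) by (exists X, l; exact (bcop_swap l r Hlr)).
  pose (DD := Dk C HC l r Hl Hr e).
  assert (D0 : is_pullback r e (et (DD 0)) (ed (DD 0))) by exact (init_spec C HC r Hr e).
  assert (DS : forall k, exists s : Hom (eD (DD (S k))) (eD (DD k)),
    is_pullback (l \o' ed (DD k)) e s (ed (DD (S k))) /\ et (DD (S k)) = et (DD k) \o' s)
    by (intros k; exact (step_spec C HC l Hl e (DD k))).
  assert (Ddisj : forall j k, j <> k -> forall (Z : C) (u : Hom Z (eD (DD j)))
    (v : Hom Z (eD (DD k))), ed (DD j) \o' u = ed (DD k) \o' v -> is_initial Z)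
    by exact (Dk_disj C HC l r Hlr Hl Hr e).
  clearbody DD.
  assert (HC' := HC). destruct HC' as [Hcc [Hun [Hdj Hco]]].
  destruct (Hcc nat count_nat (fun k => eD (DD k))) as [Sd [s Hs]].
  destruct (Hs X (fun k => ed (DD k))) as [h [Hh _]].
  assert (Hhinj : is_coproduct_injection h).
  { apply (Hco nat count_nat (fun k => eD (DD k)) X (fun k => ed (DD k))
             (fun k => einj (DD k))) with (S := Sd) (s := s); [| exact Hs | exact Hh].
    intros i j Hij.
    destruct (pb_inj C HC (ed (DD i)) (einj (DD i)) _ (ed (DD j))) as [P [p [q [Hpb _]]]].
    exists P, p, q. split; [exact Hpb|].
    exact (Ddisj i j Hij P p q (proj1 Hpb)). }
  destruct Hhinj as [Dinf [dinf Hhd]].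
  assert (infdisj : forall k (Z : C) (u : Hom Z (eD (DD k))) (v : Hom Z Dinf),
             ed (DD k) \o' u = dinf \o' v -> is_initial Z).
  { intros k Z u v E. apply (bcop_disj_cone C HC h dinf Hhd Z (s k \o' u) v).
    rewrite assoc, Hh. exact E. }
  assert (Hsig : exists sg : Hom Dinf Dinf, e \o' dinf = (l \o' dinf) \o' sg).
  { destruct (bdecompose C HC l r Hlr Dinf (e \o' dinf))
      as [PX [PT [px [pt [jX [jT [pbX [pbT HjXT]]]]]]]].
    apply (factor2 C jX jT HjXT).
    - right.
      destruct (bdecompose C HC h dinf Hhd PX px)
        as [PS [PI [zS [zI [j1 [j2 [pb1 [pb2 H12]]]]]]]].
      apply (factor2 C j1 j2 H12).
      + left.
        destruct (decompose C HC count_nat _ _ _ Hs PS zS) as [R [w [jk [Hpbk Hck]]]].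
        apply (cop_initials C R PS jk Hck). intros k.
        destruct (DS k) as [sg [[E1 P1] _]].
        destruct (Hpbk k) as [Ek _].
        assert (Econe : (l \o' ed (DD k)) \o' w k = e \o' (dinf \o' (jX \o' (j1 \o' jk k)))).
        { rewrite <- Hh. ra. rewrite Ek. destruct pb1 as [F1 _]. rewrite (assoc h), F1. ra.
          rewrite (assoc l px), (proj1 pbX). ra. reflexivity. }
        destruct (P1 _ _ _ Econe) as [c [[_ Ec] _]].
        exact (infdisj (S k) _ c _ Ec).
      + right. exists zI. destruct pb2 as [F2 _].
        rewrite <- (proj1 pbX). ra. rewrite <- F2. reflexivity.
    - left. destruct pbT as [ET _].
      destruct D0 as [_ P0]. rewrite <- assoc in ET.
      destruct (P0 _ _ _ ET) as [w [[_ Ew] _]].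
      exact (infdisj 0 _ w _ Ew). }
  destruct Hsig as [sg Esg].
  destruct (Hone Dinf) as [z0 _].
  destruct (Hs T (fun k => apow a k \o' et (DD k))) as [gS [HgS _]].
  destruct (Hhd T gS (iota None \o' z0)) as [sX [[HX1 HX2] _]].
  assert (HsX : forall k, sX \o' ed (DD k) = apow a k \o' et (DD k)).
  { intros k. rewrite <- Hh, assoc, HX1. apply HgS. }
  assert (char : forall s' : Hom X T, (forall k, s' \o' ed (DD k) = apow a k \o' et (DD k)) ->
             s' \o' dinf = iota None \o' z0 -> s' = sX).
  { intros s' H1 H2. apply (bcop_unique h dinf Hhd).
    - apply (cop_unique _ Sd s Hs). intros k. rewrite <- !assoc, Hh, H1, HsX. reflexivity.
    - rewrite H2, HX2. reflexivity. }
  assert (props : forall s' c, c \o' l = a \o' s' -> c \o' r = idm T -> s' = c \o' e ->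
    (forall k, s' \o' ed (DD k) = apow a k \o' et (DD k)) /\ s' \o' dinf = iota None \o' z0).
  { intros s' c Hc1 Hc2 Hs'. split.
    - induction k as [|k IH].
      + rewrite Hs'. destruct D0 as [E0 _]. rewrite <- assoc, <- E0, assoc, Hc2.
        simpl. reflexivity.
      + destruct (DS k) as [sg' [[E1 _] Et]].
        rewrite Et. rewrite Hs' at 1. rewrite <- assoc, <- E1, !assoc, Hc1.
        rewrite <- (assoc a), IH. simpl. ra. reflexivity.
    - apply (U_fix C HC one Y T Hone iota HT a Ha1 Ha2 Dinf _ sg).
      rewrite Hs' at 1. rewrite <- assoc, Esg, !assoc, Hc1. ra. reflexivity. }
  exists sX. split.
  - intros c Hc1 Hc2. symmetry. apply char.
    + intros k. destruct k as [|k].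
      * destruct D0 as [E0 _]. rewrite <- assoc, <- E0, assoc, Hc2. simpl. reflexivity.
      * destruct (DS k) as [sg' [[E1 _] Et]].
        rewrite Et, <- assoc, <- E1, !assoc, Hc1, <- (assoc a), HsX. simpl. ra. reflexivity.
    + rewrite <- assoc, Esg, !assoc, Hc1, <- (assoc a), HX2, assoc, Ha2. ra. f_equal.
      apply term_unique; exact Hone.
  - intros s' Hs'. destruct (Hlr T (a \o' s') (idm T)) as [c [[Hc1 Hc2] _]].
    assert (E := Hs' c Hc1 Hc2).
    destruct (props s' c Hc1 Hc2 E) as [P1 P2].
    symmetry. exact (char s' P1 P2).
Qed.

Lemma NNO_part (C : Category) (one N : C) (inj : nat -> Hom one N)
  (HN : is_coproduct (fun _ : nat => one) N inj)
  (succ : Hom N N) (Hsucc : forall n, succ \o' inj n = inj (S n)) :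
  is_NNO (inj 0) succ.
Proof.
  intros X x f.
  destruct (HN X (fun n => apow f n \o' x)) as [h [Hh _]].
  exists h. split.
  - split.
    + rewrite Hh. simpl. apply idl.
    + apply (cop_unique _ N inj HN). intros n.
      rewrite <- assoc, Hsucc, Hh, <- assoc, Hh. simpl. ra. reflexivity.
  - intros h' [H1 H2]. apply (cop_unique _ N inj HN). intros n.
    rewrite Hh. induction n as [|n IH].
    + rewrite H1. simpl. rewrite idl. reflexivity.
    + rewrite <- Hsucc, (assoc h'), H2, <- assoc, <- IH. simpl. ra. reflexivity.
Qed.

Lemma binprod_unique {C : Category} {A B P X : C} (p1 : Hom P A) (p2 : Hom P B)
  (Hp : is_binproduct p1 p2) (h1 h2 : Hom X P) :
  p1 \o' h1 = p1 \o' h2 -> p2 \o' h1 = p2 \o' h2 -> h1 = h2.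
Proof.
  intros E1 E2. destruct (Hp X (p1 \o' h2) (p2 \o' h2)) as [h [_ U]].
  rewrite <- (U h1 (conj E1 E2)), <- (U h2 (conj eq_refl eq_refl)). reflexivity.
Qed.

Lemma Y_part (C : Category) (HC : hyper_extensive C) (one : C) (Hone : is_terminal one)
  (N : C) (inj : nat -> Hom one N)
  (HN : is_coproduct (fun _ : nat => one) N inj) (Y : C) :
    exists (T : C) (a : Hom T T) (eta : Hom Y T),
      is_free_cia_Id a eta /\
      forall (P : C) (p1 : Hom P N) (p2 : Hom P Y), is_binproduct p1 p2 ->
      forall (Q : C) (l : Hom P Q) (r : Hom one Q), is_bincoproduct l r ->
        isomorphic T Q.
Proof.
  assert (HC' := HC). destruct HC' as [Hcc [Hun _]].
  destruct (Hcc (option nat) count_opt (Fam Y one)) as [T [iota HT]].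
  destruct (HT T (fun o => match o as o0 return Hom (Fam Y one o0) T with
                           | Some n => iota (Some (S n)) | None => iota None end))
    as [a [Ha _]].
  assert (Ha1 : forall n, a \o' iota (Some n) = iota (Some (S n))) by (intros n; exact (Ha (Some n))).
  assert (Ha2 : a \o' iota None = iota None) by exact (Ha None).
  exists T, a, (iota (Some 0)). split.
  - split; [exact (T_cia C HC one Y T Hone iota HT a Ha1 Ha2)|].
    intros B b Hb f.
    destruct (bincop_exists C HC one B) as [Q1 [l1 [r1 H1]]].
    destruct (Hb one Q1 l1 r1 H1 l1) as [x [Hx Ux]].
    assert (Fx : x = b \o' x).
    { destruct (H1 B (b \o' x) (idm B)) as [c [[Hc1 Hc2] _]].
      transitivity (c \o' l1); [exact (Hx c Hc1 Hc2) | exact Hc1]. }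
    destruct (HT B (fun o => match o as o0 return Hom (Fam Y one o0) B with
                           | Some n => apow b n \o' f | None => x end)) as [h [Hh _]].
    exists h. split.
    + split.
      * apply (cop_unique _ T iota HT). intros [n|].
        -- rewrite <- assoc, Ha1, <- assoc, (Hh (Some n)).
           etransitivity; [exact (Hh (Some (S n)))|]. simpl. ra. reflexivity.
        -- rewrite <- assoc, Ha2, <- assoc, Hh. simpl. exact Fx.
      * etransitivity; [exact (Hh (Some 0))|]. simpl. apply idl.
    + intros h' [E1 E2]. apply (cop_unique _ T iota HT). intros [n|].
      * rewrite Hh. simpl. induction n as [|n IH].
        -- rewrite E2. simpl. rewrite idl. reflexivity.
        -- rewrite <- Ha1, (assoc h'), E1, <- assoc, <- IH. simpl. ra. reflexivity.
      * rewrite Hh. simpl. apply Ux. intros c Hc1 Hc2.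
        rewrite Hc1, (assoc b), <- E1, <- assoc. symmetry. exact (f_equal (fun k => h' \o' k) Ha2).
  - intros P p1 p2 Hp Q l r Hlr.
    destruct (Hone Y) as [bY _].
    pose (qn := fun n => proj1_sig (constructive_indefinite_description _ (Hp Y (inj n \o' bY) (idm Y)))).
    assert (Hqn : forall n, p1 \o' qn n = inj n \o' bY /\ p2 \o' qn n = idm Y).
    { intros n. exact (proj1 (proj2_sig (constructive_indefinite_description _ (Hp Y (inj n \o' bY) (idm Y))))). }
    assert (Hpb : forall n, is_pullback (inj n) p1 bY (qn n)).
    { intros n. split; [symmetry; apply Hqn|].
      intros Z u v E. exists (p2 \o' v). split.
      - split; [apply term_unique; exact Hone|].
        apply (binprod_unique p1 p2 Hp).
        + rewrite assoc, (proj1 (Hqn n)), <- assoc.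
          rewrite (term_unique one Z Hone (bY \o' (p2 \o' v)) u). exact E.
        + rewrite assoc, (proj2 (Hqn n)). apply idl.
      - intros h' [_ F2]. rewrite <- F2, assoc, (proj2 (Hqn n)). apply idl. }
    destruct (Hun nat count_nat (fun _ => one) N inj HN P p1) as [_ Hun2].
    assert (HP : is_coproduct (fun _ : nat => Y) P qn)
      by exact (Hun2 (fun _ => Y) (fun _ => bY) qn Hpb).
    destruct (HT Q (fun o => match o as o0 return Hom (Fam Y one o0) Q with
                           | Some n => l \o' qn n | None => r end)) as [phi [Hphi _]].
    destruct (HP T (fun n => iota (Some n))) as [psiP [HpsiP _]].
    destruct (Hlr T psiP (iota None)) as [psi [[Hpsi1 Hpsi2] _]].
    exists phi, psi. split.
    + apply (cop_unique _ T iota HT). intros [n|].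
      * rewrite <- assoc, Hphi. simpl. rewrite assoc, Hpsi1, HpsiP, idl. reflexivity.
      * rewrite <- assoc, Hphi. simpl. rewrite Hpsi2, idl. reflexivity.
    + apply (bcop_unique l r Hlr).
      * apply (cop_unique _ P qn HP). intros n.
        rewrite <- !assoc, (assoc psi l), Hpsi1, HpsiP, idl. exact (Hphi (Some n)).
      * rewrite <- assoc, Hpsi2, idl. exact (Hphi None).
Qed.

Theorem mainTheorem12
  (C : Category)
  (HC : hyper_extensive C)
  (Hprod : has_binary_products C)
  (one : C) (Hone : is_terminal one)
  (N : C) (inj : nat -> Hom one N)
  (HN : is_coproduct (fun _ : nat => one) N inj)
  (succ : Hom N N) (Hsucc : forall n, succ \o' inj n = inj (S n)) :
  is_NNO (inj 0) succ /\
  forall Y : C,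
    exists (T : C) (a : Hom T T) (eta : Hom Y T),
      is_free_cia_Id a eta /\
      forall (P : C) (p1 : Hom P N) (p2 : Hom P Y), is_binproduct p1 p2 ->
      forall (Q : C) (l : Hom P Q) (r : Hom one Q), is_bincoproduct l r ->
        isomorphic T Q.
Proof.
  split.
  - exact (NNO_part C one N inj HN succ Hsucc).
  - intros Y. exact (Y_part C HC one Hone N inj HN Y).
Qed.
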